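(* Let ${\rm Bin}(m,\theta)$ be a binomially distributed random variable with parameters $m\in\mathbb{N}$ and $\theta\in(0,1)$. Then $${\rm Var}\bigl(({\rm Bin}(m,\theta)-1)_+\bigr)={\rm Var}\bigl({\rm Bin}(m,\theta)-\mathbbm{1}_{\{{\rm Bin}(m,\theta)\ge1\}}\bigr)\le(m\theta)^2.$$
   Context: $x_+=\max(x,0)$. *)

(* Defs.v *)
(* a Bin(m,theta) random variable is represented by its law,
   the binomial pmf on {0,...,m}; expectations/variances of functions of it
   are the corresponding finite sums. *)
From mathcomp Require Import all_boot all_order all_algebra.
Set Implicit Arguments. Unset Strict Implicit. Unset Printing Implicit Defensive.
Import Order.TTheory GRing.Theory Num.Theory.
Local Open Scope ring_scope.

Definition binom_pmf (R : realFieldType) (m : nat) (theta : R) (k : nat) : R :=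
  'C(m, k)%:R * theta ^+ k * (1 - theta) ^+ (m - k).

Definition binE (R : realFieldType) (m : nat) (theta : R) (f : nat -> R) : R :=
  \sum_(k < m.+1) binom_pmf m theta k * f k.

Definition binVar (R : realFieldType) (m : nat) (theta : R) (f : nat -> R) : R :=
  binE m theta (fun k => (f k - binE m theta f) ^+ 2).

Definition pos_part (R : realFieldType) (x : R) : R := Num.max x 0.

(* Main.v *)
Require Import Defs.
From mathcomp Require Import all_boot all_order all_algebra.
From mathcomp Require Import ring lra.
Import Order.TTheory GRing.Theory Num.Theory.
Local Open Scope ring_scope.

Lemma pmf_sum (R : realFieldType) (m : nat) (theta : R) :
  \sum_(k < m.+1) binom_pmf m theta k = 1.
Proof.
have := GRing.exprDn (1 - theta) theta m.
rewrite subrK expr1n => H; rewrite [RHS]H.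
apply: eq_bigr => i _.
by rewrite /binom_pmf mulr_natl mulrnAl mulrC.
Qed.

Lemma pmf_ge0 (R : realFieldType) (m : nat) (theta : R) k :
  0 <= theta -> theta <= 1 -> 0 <= binom_pmf m theta k.
Proof.
move=> h0 h1; rewrite /binom_pmf.
by rewrite !mulr_ge0 ?exprn_ge0 ?ler0n // subr_ge0.
Qed.

Lemma binE_ext (R : realFieldType) (m : nat) (theta : R) (f g : nat -> R) :
  (forall k, f k = g k) -> Defs.binE m theta f = Defs.binE m theta g.
Proof. by move=> H; apply: eq_bigr => i _; rewrite H. Qed.

Lemma binVar_ext (R : realFieldType) (m : nat) (theta : R) (f g : nat -> R) :
  (forall k, f k = g k) -> binVar m theta f = binVar m theta g.
Proof.
move=> H; rewrite /binVar (@binE_ext _ m theta _ _ H).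
by apply: binE_ext => k; rewrite H.
Qed.

Lemma binVar_alt (R : realFieldType) (m : nat) (theta : R) (f : nat -> R) :
  binVar m theta f = Defs.binE m theta (fun k => f k ^+ 2) - (Defs.binE m theta f) ^+ 2.
Proof.
rewrite /binVar; set c := Defs.binE m theta f.
rewrite /Defs.binE.
have -> : \sum_(k < m.+1) binom_pmf m theta k * (f k - c) ^+ 2 =
  \sum_(k < m.+1) binom_pmf m theta k * f k ^+ 2
  - (c *+ 2) * (\sum_(k < m.+1) binom_pmf m theta k * f k)
  + c ^+ 2 * (\sum_(k < m.+1) binom_pmf m theta k).
  rewrite !mulr_sumr -sumrB -big_split /=.
  by apply: eq_bigr => i _; ring.
rewrite pmf_sum -/(Defs.binE m theta f) -/c; ring.
Qed.

Lemma fact_moment (R : realFieldType) (n : nat) (theta : R) :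
  Defs.binE n.+2 theta (fun k => k%:R * (k%:R - 1)) = n.+2%:R * n.+1%:R * theta ^+ 2.
Proof.
rewrite /Defs.binE big_ord_recl big_ord_recl /bump /= mul0r mulr0 add0r subrr !mulr0 add0r.
have E := @pmf_sum R n theta; rewrite -[X in _ = X]mulr1 -[X in _ = _ * X]E mulr_sumr.
apply: eq_bigr => j _.
rewrite /binom_pmf /bump /= !add1n.
have HC : ('C(n.+2, j.+2) * (j.+2 * j.+1) = n.+2 * n.+1 * 'C(n, j))%N.
  have /= A := mul_bin_diag n.+2 j.+1; have /= B := mul_bin_diag n.+1 j.
  by rewrite mulnA [(_ * j.+2)%N]mulnC -A -mulnA [(_ * j.+1)%N]mulnC -B mulnA.
have HC' : ('C(n.+2, j.+2))%:R * ((j.+2)%:R * (j.+1)%:R) =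
    (n.+2)%:R * (n.+1)%:R * ('C(n, j))%:R :> R.
  by rewrite -!natrM HC.
have -> : (j.+2)%:R - 1 = (j.+1)%:R :> R by rewrite -addn1 natrD addrK.
rewrite subSS subSS !exprS.
transitivity (('C(n.+2, j.+2))%:R * ((j.+2)%:R * (j.+1)%:R) *
   (theta * (theta * theta ^+ j)) * (1 - theta) ^+ (n - j)); first ring.
rewrite HC'; ring.
Qed.

Theorem lemma6p4 (R : realFieldType) (m : nat) (theta : R)
  (h0 : 0 < theta) (h1 : theta < 1) :
  binVar m theta (fun k => pos_part (k%:R - 1)) =
    binVar m theta (fun k => k%:R - (1 <= k)%N%:R) /\
  binVar m theta (fun k => k%:R - (1 <= k)%N%:R) <= (m%:R * theta) ^+ 2.
Proof.
split.
  apply: binVar_ext => -[|k] /=.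
    by rewrite /pos_part subrr sub0r; apply/max_idPr; rewrite lerN10.
  rewrite /pos_part; apply/max_idPl.
  by rewrite subr_ge0 ler1n.
rewrite binVar_alt.
set c := Defs.binE m theta (fun k => k%:R - (1 <= k)%N%:R).
have hc := sqr_ge0 c.
apply: (@le_trans _ _ (Defs.binE m theta (fun k => k%:R * (k%:R - 1)))).
  apply: le_trans (_ : _ <= Defs.binE m theta (fun k => (k%:R - (1 <= k)%N%:R) ^+ 2)) _; first by rewrite gerBl.
  apply: ler_sum => k _; apply: ler_wpM2l; first by apply: pmf_ge0; lra.
  case: (nat_of_ord k) => [|j] /=; first by rewrite subrr mul0r expr0n.
  rewrite -[j.+1]addn1 natrD addrK mulrDl mul1r expr2 -[X in X <= _]addr0.
  by rewrite lerD2l ?mulr_ge0 ?ler0n.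
clear c hc; case: m => [|[|n]].
- by rewrite /Defs.binE big_ord_recl big_ord0 mul0r mulr0 addr0 mul0r expr0n.
- rewrite /Defs.binE big_ord_recl big_ord_recl big_ord0 /= subrr !mulr0 mul0r !add0r.
  by rewrite mulr0 addr0 sqr_ge0.
rewrite (fact_moment R n theta) exprMn ler_wpM2r ?sqr_ge0 // expr2 ler_wpM2l ?ler0n //.
by rewrite ler_nat.
Qed.
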